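(* Let $k$ be a field of characteristic $p>0$. Let $\mathfrak{a}$ be a finite-dimensional restricted Lie algebra over $k$ with trivial Lie bracket $[a,a']=0$ and trivial $p$-map $a^{[p]}=0$, and let $\mathfrak{b}=ke$ be the one-dimensional restricted Lie algebra with $p$-map $(\lambda e)^{[p]}=\lambda^p e$. On the vector space $\mathfrak{g}=\mathfrak{a}\oplus\mathfrak{b}$ define the Lie bracket $[a+\lambda e,a'+\lambda' e]=\lambda a'-\lambda' a$ (the semidirect product $\mathfrak{a}\rtimes\mathfrak{b}$ for the homomorphism $\mathfrak{b}\to\mathfrak{gl}(\mathfrak{a})$, $e\mapsto \mathrm{id}_{\mathfrak{a}}$) and the map $(a+\lambda e)^{[p]}=\lambda^{p-1}(a+\lambda e)$ for $a,a'\in\mathfrak{a}$, $\lambda,\lambda'\in k$. Then this map is a $p$-map making $\mathfrak{g}$ a restricted Lie algebra such that the inclusions of $\mathfrak{a}$ and $\mathfrak{b}$ are homomorphisms of restricted Lie algebras; it is the unique $p$-map on the Lie algebra $\mathfrak{g}$ with this property; and every nonzero vector of $\mathfrak{g}$ is $p$-closed.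
   Context: A restricted Lie algebra over $k$ is a Lie algebra $\mathfrak{g}$ with a map $x\mapsto x^{[p]}$ satisfying $(\lambda x)^{[p]}=\lambda^p x^{[p]}$, $[x^{[p]},y]=(\mathrm{ad}_x)^p(y)$ and $(x+y)^{[p]}=x^{[p]}+y^{[p]}+\sum_{r=1}^{p-1}s_r(x,y)$, where $s_r$ are the usual universal Lie polynomials (Jacobson's formula). A vector $x\in\mathfrak{g}$ is called $p$-closed if $x\neq 0$ and $x^{[p]}\in kx$. *)

(* Defs.v *)
From HB Require Import structures.
From mathcomp Require Import all_boot all_order all_algebra.
Set Implicit Arguments. Unset Strict Implicit. Unset Printing Implicit Defensive.
Import GRing.Theory.
Local Open Scope ring_scope.

Section Restricted.
Variables (k : fieldType) (L : lmodType k).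

Definition is_lie_bracket (br : L -> L -> L) : Prop :=
  [/\ (forall (c : k) x y z, br (c *: x + y) z = c *: br x z + br y z),
      (forall (c : k) x y z, br x (c *: y + z) = c *: br x y + br x z),
      (forall x, br x x = 0) &
      (forall x y z, br x (br y z) + br y (br z x) + br z (br x y) = 0)].

Definition lie_word (br : L -> L -> L) (x y : L) (w : seq bool) : L :=
  foldr (fun b acc => br (if b then x else y) acc) x w.

(* Jacobson's universal Lie polynomial s_r(x,y): r s_r(x,y) is the coefficient
   of t^(r-1) in ad(t x + y)^(p-1)(x). *)
Definition jacobson_s (p r : nat) (br : L -> L -> L) (x y : L) : L :=
  (r%:R)^-1 *: \sum_(w : (p.-1).-tuple bool | count id w == r.-1)
                  lie_word br x y w.

Definition is_pmap (p : nat) (br : L -> L -> L) (pm : L -> L) : Prop :=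
  [/\ (forall (c : k) x, pm (c *: x) = c ^+ p *: pm x),
      (forall x y, br (pm x) y = iter p (br x) y) &
      (forall x y, pm (x + y) = pm x + pm y + \sum_(1 <= r < p) jacobson_s p r br x y)].

Definition is_restricted_lie (p : nat) (br : L -> L -> L) (pm : L -> L) : Prop :=
  is_lie_bracket br /\ is_pmap p br pm.

Definition p_closed (pm : L -> L) (x : L) : Prop :=
  x != 0 /\ exists c : k, pm x = c *: x.

End Restricted.

Definition is_restricted_hom (k : fieldType) (A B : lmodType k)
  (brA : A -> A -> A) (pmA : A -> A) (brB : B -> B -> B) (pmB : B -> B)
  (f : A -> B) : Prop :=
  [/\ (forall (c : k) x y, f (c *: x + y) = c *: f x + f y),
      (forall x y, f (brA x y) = brB (f x) (f y)) &
      (forall x, f (pmA x) = pmB (f x))].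

(* The semidirect product g = a x| k e, a = V with trivial bracket and p-map,
   elements written as pairs (a, lambda) meaning a + lambda e. *)
Section Semidirect.
Variables (k : fieldType) (V : vectType k).

Definition sd_g := (V * k^o)%type.

Definition sd_br (x y : sd_g) : sd_g :=
  (x.2 *: y.1 - y.2 *: x.1, 0).

Definition sd_pm (p : nat) (x : sd_g) : sd_g := (x.2 ^+ p.-1) *: x.

Definition a_br (x y : V) : V := 0.
Definition a_pm (x : V) : V := 0.
Definition b_br (x y : k^o) : k^o := 0.
Definition b_pm (p : nat) (x : k^o) : k^o := x ^+ p.

Definition incl_a (a : V) : sd_g := (a, 0).
Definition incl_b (l : k^o) : sd_g := (0, l).
End Semidirect.

(* Main.v *)
Require Import Defs.
From HB Require Import structures.
From mathcomp Require Import all_boot all_order all_algebra.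
From mathcomp Require Import ring.
Import GRing.Theory.
Local Open Scope ring_scope.
Set Implicit Arguments. Unset Strict Implicit.

Lemma big_tuple_cons (R : zmodType) n (P : seq bool -> bool) (F : seq bool -> R) :
  \sum_(w : n.+1.-tuple bool | P w) F w =
  \sum_(w : n.-tuple bool | P (true :: w)) F (true :: w) +
  \sum_(w : n.-tuple bool | P (false :: w)) F (false :: w).
Proof.
have hb : bijective (fun bw : bool * n.-tuple bool => [tuple of bw.1 :: bw.2]).
  exists (fun t : n.+1.-tuple bool => (thead t, [tuple of behead t])).
    by case=> b w /=; congr pair; apply: val_inj.
  by move=> t; rewrite [in RHS](tuple_eta t); apply: val_inj.
rewrite (reindex _ (onW_bij _ hb)) /=.
rewrite -(big_bool _ (fun b => \sum_(w : n.-tuple bool | P (b :: w)) F (b :: w))).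
rewrite (pair_big_dep xpredT (fun b (w : n.-tuple bool) => P (b :: w)) (fun b (w : n.-tuple bool) => F (b :: w))).
by [].
Qed.
Section S.
Variables (k : fieldType) (V : vectType k).
Implicit Types x y z u v : sd_g V.

Definition sc (x : sd_g V) : k := x.2.

Lemma br_addr z u v : sd_br z (u + v) = sd_br z u + sd_br z v.
Proof.
rewrite /sd_br /=; congr pair; last by rewrite addr0.
by rewrite scalerDr scalerDl opprD addrACA.
Qed.

Lemma br_0r z : sd_br z 0 = 0.
Proof. by rewrite /sd_br /= !scaler0 scale0r subrr. Qed.

Lemma br_sumr z (I : finType) (P : pred I) (f : I -> sd_g V) :
  sd_br z (\sum_(i | P i) f i) = \sum_(i | P i) sd_br z (f i).
Proof. exact: (big_morph _ (br_addr z) (br_0r z)). Qed.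

Lemma br_scaler z c u : sd_br z (c *: u) = c *: sd_br z u.
Proof.
rewrite /sd_br /=; congr pair; last by rewrite scaler0.
by rewrite scalerBr !scalerA mulrC; congr (_ - _); rewrite -scalerA.
Qed.

Lemma br_br z u v : sd_br z (sd_br u v) = sc z *: sd_br u v.
Proof.
rewrite /sd_br /=; congr pair; last by rewrite scaler0.
by rewrite scale0r subr0.
Qed.

Lemma br_xx x : sd_br x x = 0.
Proof. by rewrite /sd_br subrr. Qed.

Definition SS x y n m := \sum_(w : n.-tuple bool | count id w == m) lie_word (@sd_br k V) x y w.

Lemma SS0 x y m : SS x y 0 m = if m == 0%N then x else 0.
Proof.
rewrite /SS; case: m => [|m] /=.
  rewrite (eq_bigl (pred1 [tuple])) ?big_pred1_eq //.
  by move=> w; rewrite [w]tuple0; symmetry; exact: eqxx.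
by rewrite big_pred0 // => w; rewrite [w]tuple0.
Qed.

Lemma SSS x y n m : SS x y n.+1 m =
  (if m is m'.+1 then sd_br x (SS x y n m') else 0) + sd_br y (SS x y n m).
Proof.
rewrite /SS (@big_tuple_cons _ _ (fun s => count id s == m) (lie_word (@sd_br k V) x y)) /=; congr (_ + _).
  case: m => [|m]; first by rewrite big_pred0.
  by rewrite br_sumr; apply: eq_bigr.
by rewrite br_sumr.
Qed.

Lemma SS_closed x y n m : SS x y n.+1 m =
  ('C(n, m)%:R * (sc x ^+ m * sc y ^+ (n - m))) *: sd_br y x.
Proof.
elim: n m => [|n IH] m.
  rewrite SSS; case: m => [|[|m]] /=; rewrite !SS0 /=.
  - by rewrite add0r bin0 !expr0 !mulr1 scale1r.
  - by rewrite br_xx br_0r addr0 bin0n mul0r scale0r.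
  - by rewrite !br_0r addr0 bin0n mul0r scale0r.
rewrite SSS; case: m => [|m]; rewrite !IH !br_scaler !br_br !scalerA.
  rewrite add0r !bin0 !subn0; congr (_ *: _); rewrite expr0 exprS; ring.
rewrite -(scalerDl (sd_br y x)); congr (_ *: _); rewrite binS natrD subSS.
case: (ltnP m n) => h.
  have e : (n - m = (n - m.+1).+1)%N by rewrite -subSn // subSS.
  rewrite e !exprS; ring.
rewrite (@bin_small n m.+1) ?ltnS // !exprS; ring.
Qed.
End S.

Section Scal.
Variables (k : fieldType) (n : nat) (hp : n.+2 \in [pchar k]).

Lemma hq : (n.+1%:R : k) = -1.
Proof. by apply/eqP; rewrite -addr_eq0 addrC -mulrS pcharf0. Qed.

Lemma binq j : (j <= n)%N -> ('C(n.+1, j.+1)%:R : k) = - 'C(n.+1, j)%:R.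
Proof.
move=> hj; have : (n.+2 %| 'C(n.+2, j.+1))%N.
  by apply: prime_dvd_bin (pcharf_prime hp) _; rewrite /= !ltnS.
by rewrite (dvdn_pcharf hp) binS natrD addr_eq0 => /eqP.
Qed.

Lemma Cj j : (j <= n)%N -> ('C(n.+1, j)%:R : k) = (j.+1%:R)^-1 * 'C(n, j)%:R.
Proof.
move=> hj; have nz : (j.+1%:R : k) != 0.
  by rewrite -(dvdn_pcharf hp) gtnNdvd // !ltnS.
apply: (mulfI nz); rewrite mulrA mulfV // mul1r.
have := mul_bin_diag n.+1 j; move/(congr1 (fun t => t%:R : k)).
rewrite !natrM binq // hq mulN1r mulrN => /eqP; rewrite eqr_opp => /eqP E.
by rewrite -E.
Qed.

Definition TT (a b : k) := \sum_(j < n.+1) 'C(n.+1, j)%:R * (a ^+ j * b ^+ (n - j)).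

Lemma scalA (a b : k) : (a + b) ^+ n.+1 = a ^+ n.+1 + TT a b * b.
Proof.
rewrite addrC exprDn big_ord_recr /= subnn expr0 mul1r binn mulr1n addrC.
congr (_ + _); rewrite /TT mulr_suml; apply: eq_bigr => -[j hj] _ /=.
rewrite subSn // exprS -mulr_natl; ring.
Qed.

Lemma scalB (a b : k) : (a + b) ^+ n.+1 = b ^+ n.+1 - TT a b * a.
Proof.
rewrite exprDn big_ord_recr /= subnn expr0 mul1r binn mulr1n addrC.
congr (_ + _); rewrite /TT (reindex_inj rev_ord_inj) /= mulr_suml -sumrN.
apply: eq_bigr => -[i hi] _ /=; rewrite subSS.
have hin : (i <= n)%N by [].
rewrite subSn ?leq_subr // subKn // exprS -mulr_natl.
have -> : ('C(n.+1, n - i)%:R : k) = - 'C(n.+1, i)%:R.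
  by rewrite -binq // -subSS bin_sub.
ring.
Qed.
End Scal.
Arguments TT {k} n a b.
Arguments Cj {k n} hp j _.
Arguments scalA {k} n a b.
Arguments scalB {k n} hp a b.

Section Jac.
Variables (k : fieldType) (V : vectType k) (n : nat) (hp : n.+2 \in [pchar k]).

Lemma frob (a b : k) : (a + b) ^+ n.+2 = a ^+ n.+2 + b ^+ n.+2.
Proof. by rewrite -!(pFrobenius_autE hp) rmorphD. Qed.

Lemma jac (x y : sd_g V) :
  \sum_(1 <= r < n.+2) jacobson_s n.+2 r (@sd_br k V) x y =
  TT n (sc x) (sc y) *: sd_br y x.
Proof.
rewrite big_add1 /= big_mkord /TT scaler_suml; apply: eq_bigr => -[j hj] _ /=.
rewrite /jacobson_s.
change ((j.+1%:R)^-1 *: SS x y n.+1 j = ('C(n.+1, j)%:R * (sc x ^+ j * sc y ^+ (n - j))) *: sd_br y x).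
rewrite SS_closed scalerA (Cj hp j) ?mulrA //.
Qed.

Lemma fstD (u v : sd_g V) : (u + v).1 = u.1 + v.1. Proof. by []. Qed.
Lemma sndD (u v : sd_g V) : (u + v).2 = u.2 + v.2. Proof. by []. Qed.
Lemma fstZ c (u : sd_g V) : (c *: u).1 = c *: u.1. Proof. by []. Qed.
Lemma sndZ c (u : sd_g V) : (c *: u).2 = c * u.2. Proof. by []. Qed.

Lemma pm_add (x y : sd_g V) :
  sd_pm n.+2 (x + y) = sd_pm n.+2 x + sd_pm n.+2 y + TT n (sc x) (sc y) *: sd_br y x.
Proof.
case: x y => [x1 x2] [y1 y2]; rewrite /sd_pm /sd_br /sc /=.
congr pair; rewrite ?fstD ?sndD ?fstZ ?sndZ ?fstD ?sndD /=.
  rewrite scalerDr {1}(scalA n x2 y2) (scalB hp x2 y2).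
  rewrite !scalerDl scaleNr scalerBr !scalerA -!addrA; congr (_ + _).
  rewrite addrCA; congr (_ + _).
change ((x2 + y2) ^+ n.+1 * (x2 + y2) = x2 ^+ n.+1 * x2 + y2 ^+ n.+1 * y2 + TT n x2 y2 * 0).
by rewrite mulr0 addr0 -!exprSr frob.
Qed.
End Jac.

Lemma z3 (M : zmodType) (a b c : M) : a - b + (c - a) + (b - c) = 0.
Proof.
have -> : a - b + (c - a) = c - b by rewrite addrC [c - a + _]addrA subrK.
by rewrite addrC subrKA subrr.
Qed.

Section Main.
Variables (k : fieldType) (V : vectType k).

Lemma pair_eq (u v : sd_g V) : u.1 = v.1 -> u.2 = v.2 -> u = v.
Proof. by case: u v => [a b] [c d] /= -> ->. Qed.

Lemma br_anti (u v : sd_g V) : sd_br u v = - sd_br v u.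
Proof. by apply: pair_eq => /=; rewrite ?opprB ?oppr0. Qed.

Lemma br_addl (u v z : sd_g V) : sd_br (u + v) z = sd_br u z + sd_br v z.
Proof. by rewrite br_anti br_addr opprD -!br_anti. Qed.

Lemma br_scalel c (u z : sd_g V) : sd_br (c *: u) z = c *: sd_br u z.
Proof. by rewrite br_anti br_scaler -scalerN -br_anti. Qed.

Lemma iter_br (x y : sd_g V) m :
  iter m (sd_br x) (sd_br x y) = sc x ^+ m *: sd_br x y.
Proof.
elim: m => [|m IH]; first by rewrite expr0 scale1r.
by rewrite iterS IH br_scaler br_br scalerA exprSr.
Qed.
End Main.

Theorem proposition1p1 (k : fieldType) (p : nat) (hp : p \in [pchar k])
    (V : vectType k) :
  [/\ is_restricted_lie p (@sd_br k V) (@sd_pm k V p),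
      is_restricted_hom (@a_br k V) (@a_pm k V) (@sd_br k V) (@sd_pm k V p) (@incl_a k V),
      is_restricted_hom (@b_br k) (@b_pm k p) (@sd_br k V) (@sd_pm k V p) (@incl_b k V),
      (forall pm' : sd_g V -> sd_g V,
          is_restricted_lie p (@sd_br k V) pm' ->
          is_restricted_hom (@a_br k V) (@a_pm k V) (@sd_br k V) pm' (@incl_a k V) ->
          is_restricted_hom (@b_br k) (@b_pm k p) (@sd_br k V) pm' (@incl_b k V) ->
          forall x, pm' x = sd_pm p x) &
      (forall x : sd_g V, x != 0 -> p_closed (@sd_pm k V p) x)].
Proof.
have p2 := prime_gt1 (pcharf_prime hp).
case: p hp p2 => [|[|n]] hp p2 //.
have H1 : is_restricted_lie n.+2 (@sd_br k V) (@sd_pm k V n.+2).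
  split.
    split.
    - by move=> c x y z; rewrite br_addl br_scalel.
    - by move=> c x y z; rewrite br_addr br_scaler.
    - exact: br_xx.
    - move=> x y z; rewrite !br_br; apply: pair_eq => /=; last by rewrite !scaler0 !addr0.
      rewrite /sc !scalerBr !scalerA (mulrC y.2 x.2) (mulrC z.2 x.2) (mulrC z.2 y.2).
      exact: z3.
  split.
  - move=> c x; rewrite /sd_pm sndZ !scalerA; congr (_ *: _).
    by rewrite exprMn mulrAC -exprSr.
  - move=> x y; rewrite /sd_pm br_scalel iterSr iter_br.
    by [].
  - by move=> x y; rewrite (jac hp) pm_add.
have H2 : is_restricted_hom (@a_br k V) (@a_pm k V) (@sd_br k V) (@sd_pm k V n.+2) (@incl_a k V).
  split.
  - by move=> c x y; apply: pair_eq => /=; rewrite ?scaler0 ?addr0.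
  - by move=> x y; apply: pair_eq => /=; rewrite ?scale0r ?subr0.
  - by move=> x; apply: pair_eq => /=; rewrite expr0n /= ?scale0r ?mul0r.
have H3 : is_restricted_hom (@b_br k) (@b_pm k n.+2) (@sd_br k V) (@sd_pm k V n.+2) (@incl_b k V).
  split.
  - by move=> c x y; apply: pair_eq => /=; rewrite ?scaler0 ?addr0.
  - by move=> x y; apply: pair_eq => /=; rewrite ?scaler0 ?subr0.
  - move=> x; apply: pair_eq => /=; first by rewrite scaler0.
    by rewrite /b_pm exprSr.
split => //.
- move=> pm' [_ [_ _ Hj]] [_ _ Ha] [_ _ Hb] x.
  have ex : x = incl_a x.1 + @incl_b k V x.2.
    by apply: pair_eq => /=; rewrite ?addr0 ?add0r.
  case: H1 => _ [_ _ Hj0]; case: H2 => _ _ Ha0; case: H3 => _ _ Hb0.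
  by rewrite ex Hj Hj0 -Ha -Hb -Ha0 -Hb0.
- move=> x nx; split => //; by exists (x.2 ^+ n.+1).
Qed.
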